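(* Let $\Phi$ be an $(s,d)$-product-sparse formula over the variables $Y\cup Z$, $Y=\{y_1,\dots,y_m\}$, $Z=\{z_1,\dots,z_m\}$, and let $v$ be a node of $\Phi$ with product-sparse depth $d(v)$. If $v$ is $k$-weak, then $\mathrm{maxrank}(M_v)\le 2^{s\cdot d(v)}\cdot|\Phi_v|\cdot 2^{b(v)-k/2}$.
   Context: $\mathbb{F}$ is a field. For $g\in\mathbb{F}[Y,Z]$, $M_g$ has rows indexed by monic multilinear monomials $p$ in $Y$ and columns by monic multilinear monomials $q$ in $Z$, with $M_g(p,q)=G$ iff $g=pq\,G+Q$ uniquely with $G$ containing only variables present in $p,q$ and $Q$ having no monomial divisible by $pq$ that contains only variables present in $p,q$; $\mathrm{maxrank}(M_g)=\max_{S:Y\cup Z\to\mathbb{F}}\mathrm{rank}(M_g|_S)$. $M_v$ denotes $M_g$ for the polynomial $g$ computed at $v$. A formula is a fan-in-2 arithmetic circuit (leaves labelled by variables or constants, internal plus/product gates) whose underlying graph is a tree. $\Phi_v$ is the subformula rooted at $v$ and $|\Phi_v|$ its number of gates; $X_v$ (resp. $Y_v$, $Z_v$) is the set of variables (resp. those in $Y$, in $Z$) appearing in $\Phi_v$. A product gate with children $v_1,v_2$ is disjoint if $X_{v_1}\cap X_{v_2}=\emptyset$ and $s$-sparse if the polynomial computed at one of $v_1,v_2$ has at most $2^s$ monomials. The product-sparse depth of $v$ is the maximum number of non-disjoint product gates on any path from a leaf to $v$. $\Phi$ is $(s,d)$-product-sparse if every product gate is disjoint or $s$-sparse, and $d$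 is the product-sparse depth of the root. Let $a(v)=\min\{|Y_v|,|Z_v|\}$ and $b(v)=(|Y_v|+|Z_v|)/2$. A node $v$ is $k$-unbalanced if $b(v)-a(v)\ge k$. A simple path $\gamma$ from a leaf to $v$ is $k$-unbalanced if it contains a $k$-unbalanced node, and central if for every edge from $u_1$ to $u$ on $\gamma$, $b(u)\le 2b(u_1)$. A node $v$ is $k$-weak if every central path reaching $v$ is $k$-unbalanced. *)

(* Defs.v *)
From Stdlib Require Import Reals ClassicalEpsilon.
From mathcomp Require Import all_boot all_algebra.
From mathcomp Require Import mpoly.

Set Implicit Arguments.
Unset Strict Implicit.
Unset Printing Implicit Defensive.

Import GRing.Theory.

(* Formulas over the variables 'I_n (here n = m + m: index lshift m i is y_i,
   index rshift m i is z_i). *)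
Inductive formula (F : Type) (n : nat) : Type :=
| FVar of 'I_n
| FConst of F
| FAdd of formula F n & formula F n
| FMul of formula F n & formula F n.

Arguments FVar {F n}.
Arguments FConst {F n}.

Section Formulas.
Variables (F : fieldType) (m : nat).
Local Notation n := (m + m)%N.
Local Notation form := (formula F n).

Fixpoint fpoly (f : form) : {mpoly F[n]} :=
  match f with
  | FVar i => 'X_i
  | FConst c => c%:MP
  | FAdd f1 f2 => (fpoly f1 + fpoly f2)%R
  | FMul f1 f2 => (fpoly f1 * fpoly f2)%R
  end.

Fixpoint fsize (f : form) : nat :=
  match f with
  | FVar _ | FConst _ => 1
  | FAdd f1 f2 | FMul f1 f2 => (fsize f1 + fsize f2).+1
  end.

Fixpoint fvars (f : form) : {set 'I_n} :=
  match f with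
  | FVar i => [set i]
  | FConst _ => set0
  | FAdd f1 f2 | FMul f1 f2 => fvars f1 :|: fvars f2
  end.

Definition Yvars (f : form) : {set 'I_m} := [set i | lshift m i \in fvars f].
Definition Zvars (f : form) : {set 'I_m} := [set i | rshift m i \in fvars f].

(* subformulas Phi_v, for v ranging over the nodes of Phi *)
Fixpoint subformulas (f : form) : seq form :=
  f :: match f with
       | FVar _ | FConst _ => [::]
       | FAdd f1 f2 | FMul f1 f2 => subformulas f1 ++ subformulas f2
       end.

(* all simple paths from a leaf to the root, listed root first, leaf last
   (each node represented by the subformula rooted at it) *)
Fixpoint leaf_paths (f : form) : seq (seq form) :=
  match f with
  | FVar _ | FConst _ => [:: [:: f]]
  | FAdd f1 f2 | FMul f1 f2 => [seq f :: p | p <- leaf_paths f1 ++ leaf_paths f2]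
  end.

Definition disjoint_prod (f1 f2 : form) : bool := fvars f1 :&: fvars f2 == set0.

Definition sparse_prod (s : nat) (f1 f2 : form) : bool :=
  (size (msupp (fpoly f1)) <= expn 2 s) || (size (msupp (fpoly f2)) <= expn 2 s).

Definition nondisj_prod (f : form) : bool :=
  match f with FMul f1 f2 => ~~ disjoint_prod f1 f2 | _ => false end.

Definition psdepth (f : form) : nat :=
  \max_(p <- leaf_paths f) count nondisj_prod p.

Fixpoint prod_gates_ok (s : nat) (f : form) : Prop :=
  match f with
  | FVar _ | FConst _ => True
  | FAdd f1 f2 => prod_gates_ok s f1 /\ prod_gates_ok s f2
  | FMul f1 f2 => (disjoint_prod f1 f2 || sparse_prod s f1 f2)
                  /\ prod_gates_ok s f1 /\ prod_gates_ok s f2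
  end.

Definition product_sparse (s d : nat) (f : form) : Prop :=
  prod_gates_ok s f /\ psdepth f = d.

Definition anode (f : form) : R := INR (minn #|Yvars f| #|Zvars f|).
Definition bnode (f : form) : R := Rdiv (Rplus (INR #|Yvars f|) (INR #|Zvars f|)) 2.

Definition unbalanced (k : R) (f : form) : Prop := Rge (Rminus (bnode f) (anode f)) k.

Fixpoint central (p : seq form) : Prop :=
  match p with
  | u :: ((u1 :: _) as rest) => Rle (bnode u) (Rmult 2 (bnode u1)) /\ central rest
  | _ => True
  end.

Definition unbalanced_path (k : R) (p : seq form) : Prop :=
  List.Exists (unbalanced k) p.

Definition weak (k : R) (f : form) : Prop :=
  forall p, List.In p (leaf_paths f) -> central p -> unbalanced_path k p.

(* the monic multilinear monomial p*q, p in Y, q in Z *)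
Definition pq_set (p q : {set 'I_m}) : {set 'I_n} :=
  [set lshift m i | i in p] :|: [set rshift m j | j in q].

Definition pq_mon (p q : {set 'I_m}) : 'X_{1..n} :=
  [multinom ((i \in pq_set p q) : nat) | i < n].

(* M_g(p,q) = G, where g = pq G + Q, G only has variables of p,q and Q has
   no monomial divisible by pq containing only variables of p,q *)
Definition Mentry (g : {mpoly F[n]}) (p q : {set 'I_m}) : {mpoly F[n]} :=
  \sum_(mu <- msupp g | (pq_mon p q <= mu)%MM &&
                         [forall i, (mu i != 0%N) ==> (i \in pq_set p q)])
     (g@_mu *: 'X_[(mu - pq_mon p q)%MM])%R.

Local Notation N := #|{: {set 'I_m}}|.

Definition Mat_at (g : {mpoly F[n]}) (S : 'I_n -> F) : 'M[F]_(N, N) :=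
  \matrix_(i < N, j < N) (Mentry g (enum_val i) (enum_val j)).@[S].

Definition decide (P : Prop) : bool :=
  if excluded_middle_informative P then true else false.

(* maxrank(M_g) = max over S of rank(M_g|_S)  (every rank is <= N) *)
Definition maxrank (g : {mpoly F[n]}) : nat :=
  \max_(r < N.+1 | decide (exists S : 'I_n -> F, \rank (Mat_at g S) = r)) r.

End Formulas.

(* Main.v *)
Require Import Defs.
From Stdlib Require Import Reals.
From mathcomp Require Import all_boot all_algebra.
From mathcomp Require Import mpoly.
From Stdlib Require Import Lia Lra Classical ClassicalEpsilon.
From mathcomp Require Import zify.

Module Aux.
Set Implicit Arguments.
Unset Strict Implicit.
Unset Printing Implicit Defensive.
Import GRing.Theory.

Section Alg.
Variables (F : fieldType) (m : nat).
Local Notation n := (m + m)%N.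
Local Notation N := #|{: {set 'I_m}}|.
Local Notation mp := {mpoly F[n]}.
Local Open Scope ring_scope.

Lemma ord_split (i : 'I_n) :
  (exists a, i = lshift m a) \/ (exists b, i = rshift m b).
Proof.
rewrite -(splitK i); case: (fintype.split i) => [a|b]; [left; exists a|right; exists b]; by [].
Qed.

Lemma lshift_neq_rshift (a b : 'I_m) : lshift m a != rshift m b.
Proof.
apply/eqP => /(congr1 val) /=; move: (ltn_ord a) => Ha H; lia.
Qed.

Lemma mem_pq_l (p q : {set 'I_m}) a : (lshift m a \in pq_set p q) = (a \in p).
Proof.
rewrite /pq_set in_setU (mem_imset _ _ (@lshift_inj m m)).
have -> : (lshift m a \in [set rshift m j | j in q]) = false.
  by apply/imsetP => -[b _ /eqP]; rewrite (negbTE (lshift_neq_rshift _ _)).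
by rewrite orbF.
Qed.

Lemma mem_pq_r (p q : {set 'I_m}) b : (rshift m b \in pq_set p q) = (b \in q).
Proof.
rewrite /pq_set in_setU (mem_imset _ _ (@rshift_inj m m)).
have -> : (rshift m b \in [set lshift m j | j in p]) = false.
  by apply/imsetP => -[a _ /eqP]; rewrite eq_sym (negbTE (lshift_neq_rshift _ _)).
by [].
Qed.

Lemma pq_monE (p q : {set 'I_m}) i : pq_mon p q i = (i \in pq_set p q) :> nat.
Proof. by rewrite /pq_mon mnmE. Qed.

Definition Ys (l : 'X_{1..n}) : {set 'I_m} := [set a | l (lshift m a) != 0%N].
Definition Zs (l : 'X_{1..n}) : {set 'I_m} := [set b | l (rshift m b) != 0%N].

Lemma cond_iff (l : 'X_{1..n}) (p q : {set 'I_m}) :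
  ((pq_mon p q <= l)%MM && [forall i, (l i != 0%N) ==> (i \in pq_set p q)])
  = (p == Ys l) && (q == Zs l).
Proof.
apply/idP/idP.
- case/andP => /mnm_lepP H1 /forallP H2.
  have E : forall i, (i \in pq_set p q) = (l i != 0%N).
    move=> i; apply/idP/idP => [Hi|Hi]; last by move: (H2 i); rewrite Hi.
    by move: (H1 i); rewrite pq_monE Hi; case: (l i).
  apply/andP; split; apply/eqP/setP => a; rewrite inE.
  + by rewrite -E mem_pq_l.
  + by rewrite -E mem_pq_r.
- case/andP => /eqP -> /eqP ->.
  have E : forall i, (i \in pq_set (Ys l) (Zs l)) = (l i != 0%N).
    move=> i; case: (ord_split i) => -[a ->].
    + by rewrite mem_pq_l inE.
    + by rewrite mem_pq_r inE.
  apply/andP; split.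
  + apply/mnm_lepP => i; rewrite pq_monE E; by case: (l i).
  + by apply/forallP => i; rewrite E; apply/implyP.
Qed.

Lemma Mentry_X (l : 'X_{1..n}) (p q : {set 'I_m}) :
  Mentry 'X_[l] p q = if (p == Ys l) && (q == Zs l)
                      then ('X_[(l - pq_mon p q)%MM] : mp) else 0.
Proof.
rewrite /Mentry msuppX big_cons big_nil cond_iff mcoeffX eqxx scale1r.
by case: ifP => //; rewrite addr0.
Qed.

Lemma sum_supp (V : lmodType F) (G : 'X_{1..n} -> V) (g : mp) (r : seq 'X_{1..n}) :
  uniq r -> {subset msupp g <= r} ->
  \sum_(l <- r) g@_l *: G l = \sum_(l <- msupp g) g@_l *: G l.
Proof.
move=> ur sub; rewrite (bigID (fun l => l \in msupp g)) /=.
rewrite [X in _ + X]big1 ?addr0; last first.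
  by move=> l; rewrite mcoeff_msupp negbK => /eqP ->; rewrite scale0r.
rewrite -big_filter; apply: perm_big; apply: uniq_perm.
- exact: filter_uniq.
- exact: msupp_uniq.
- move=> l; rewrite mem_filter; case H: (l \in msupp g) => //=; exact: sub.
Qed.

Lemma enum_val_eq (i : 'I_N) (x : {set 'I_m}) : (enum_val i == x) = (i == enum_rank x).
Proof. by apply/eqP/eqP => [<-|->]; [rewrite enum_valK | rewrite enum_rankK]. Qed.

Lemma MatE (g : mp) S : Mat_at g S = \sum_(l <- msupp g) g@_l *: Mat_at 'X_[l] S.
Proof.
apply/matrixP => i j; rewrite summxE !mxE /Mentry big_mkcond /= raddf_sum.
apply: eq_bigr => l _; rewrite !mxE Mentry_X cond_iff.
case: (_ && _); [exact: mevalZ | by rewrite !raddf0 mulr0].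
Qed.

Lemma Mat0 S : Mat_at (0 : mp) S = 0.
Proof. by rewrite MatE msupp0 big_nil. Qed.

Lemma MatD (g h : mp) S : Mat_at (g + h) S = Mat_at g S + Mat_at h S.
Proof.
pose r := undup (msupp g ++ msupp h).
have ur : uniq r by apply: undup_uniq.
rewrite !MatE -!(@sum_supp _ _ _ r ur).
- by rewrite -big_split; apply: eq_bigr => l _; rewrite mcoeffD scalerDl.
- by move=> l Hl; rewrite mem_undup mem_cat Hl orbT.
- by move=> l Hl; rewrite mem_undup mem_cat Hl.
- by move=> l /msuppD_le; rewrite mem_undup.
Qed.

Lemma MatZ c (g : mp) S : Mat_at (c *: g) S = c *: Mat_at g S.
Proof.
rewrite !MatE -(@sum_supp _ _ _ (msupp g) (msupp_uniq g)).
- by rewrite scaler_sumr; apply: eq_bigr => l _; rewrite mcoeffZ scalerA.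
- by move=> l; rewrite !mcoeff_msupp mcoeffZ mulf_eq0 negb_or => /andP[].
Qed.

Lemma Mat_sum (I : Type) (r : seq I) (G : I -> mp) S :
  Mat_at (\sum_(i <- r) G i) S = \sum_(i <- r) Mat_at (G i) S.
Proof.
elim: r => [|a r IH]; first by rewrite !big_nil Mat0.
by rewrite !big_cons MatD IH.
Qed.

Lemma MX_E (l : 'X_{1..n}) S :
  Mat_at ('X_[l] : mp) S = ('X_[(l - pq_mon (Ys l) (Zs l))%MM] : mp).@[S] *:
     delta_mx (enum_rank (Ys l)) (enum_rank (Zs l)).
Proof.
apply/matrixP => i j; rewrite !mxE Mentry_X !enum_val_eq.
case: (i =P enum_rank (Ys l)) => [->|] /=; last by rewrite meval0 mulr0.
case: (j =P enum_rank (Zs l)) => [->|] /=; last by rewrite meval0 mulr0.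
by rewrite !enum_rankK mulr1.
Qed.

Lemma mul_delta_entry (A B : 'M[F]_N) i0 j0 i j :
  (A *m delta_mx i0 j0 *m B) i j = A i i0 * B j0 j.
Proof.
have E1 : forall k, (A *m delta_mx i0 j0) i k = A i i0 * (k == j0)%:R.
  move=> k; rewrite mxE (bigD1 i0) //= big1 ?addr0.
    by rewrite mxE eqxx.
  by move=> l /negbTE nl; rewrite mxE nl mulr0.
rewrite mxE (bigD1 j0) //= big1 ?addr0.
  by rewrite E1 eqxx mulr1.
by move=> k /negbTE nk; rewrite E1 nk mulr0 mul0r.
Qed.

Lemma YsD (nu mu : 'X_{1..n}) : Ys (nu + mu) = Ys nu :|: Ys mu.
Proof. by apply/setP => a; rewrite !inE mnmDE addn_eq0 negb_and. Qed.
Lemma ZsD (nu mu : 'X_{1..n}) : Zs (nu + mu) = Zs nu :|: Zs mu.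
Proof. by apply/setP => a; rewrite !inE mnmDE addn_eq0 negb_and. Qed.

Lemma mnm_id (nu mu : 'X_{1..n}) :
  (nu + mu - pq_mon (Ys nu :|: Ys mu) (Zs nu :|: Zs mu))%MM =
  ((nu - pq_mon (Ys nu) (Zs nu)) + (mu - pq_mon (Ys mu) (Zs mu)) +
   pq_mon (Ys mu :&: Ys nu) set0 + pq_mon set0 (Zs mu :&: Zs nu))%MM.
Proof.
apply/mnmP => i; rewrite !(mnmBE, mnmDE) !pq_monE.
case: (ord_split i) => -[a ->].
- rewrite !mem_pq_l !inE.
  case: (nu (lshift m a)) => [|x]; case: (mu (lshift m a)) => [|y] /=; lia.
- rewrite !mem_pq_r !inE.
  case: (nu (rshift m a)) => [|x]; case: (mu (rshift m a)) => [|y] /=; lia.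
Qed.

Definition Amat S (P : {set 'I_m}) : 'M[F]_N :=
  \matrix_(i, i') ((enum_val i == P :|: enum_val i')%:R *
                   ('X_[pq_mon (enum_val i' :&: P) set0] : mp).@[S]).
Definition Bmat S (Q : {set 'I_m}) : 'M[F]_N :=
  \matrix_(j', j) ((enum_val j == Q :|: enum_val j')%:R *
                   ('X_[pq_mon set0 (enum_val j' :&: Q)] : mp).@[S]).
Definition cX S (nu : 'X_{1..n}) : F := ('X_[(nu - pq_mon (Ys nu) (Zs nu))%MM] : mp).@[S].

Lemma MX_mul (nu mu : 'X_{1..n}) S :
  Mat_at ('X_[nu + mu] : mp) S =
  cX S nu *: (Amat S (Ys nu) *m Mat_at ('X_[mu] : mp) S *m Bmat S (Zs nu)).
Proof.
rewrite !MX_E -scalemxAr -scalemxAl; apply/matrixP => i j.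
rewrite [in RHS]mxE [in RHS]mxE mul_delta_entry !mxE !enum_rankK YsD ZsD -!enum_val_eq.
case: (enum_val i == _); case: (enum_val j == _); rewrite /=.
all: rewrite ?mulr0 ?mul0r ?mulr1 ?mul1r ?mulr0 //.
by rewrite mnm_id !mpolyXD !mevalM /cX !mulrA.
Qed.

Lemma Mat_Xmul (nu : 'X_{1..n}) (g : mp) S :
  Mat_at ('X_[nu] * g) S =
  cX S nu *: (Amat S (Ys nu) *m Mat_at g S *m Bmat S (Zs nu)).
Proof.
rewrite {1}(mpolyE g) mulr_sumr Mat_sum [in RHS]MatE mulmx_sumr mulmx_suml scaler_sumr.
apply: eq_bigr => l _.
rewrite -scalerAr -mpolyXD MatZ MX_mul.
rewrite -scalemxAr -scalemxAl !scalerA mulrC.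
by [].
Qed.

Lemma rank_scale (a : F) (M : 'M[F]_N) : (\rank (a *: M) <= \rank M)%N.
Proof. by rewrite -mul_scalar_mx mxrankM_maxr. Qed.

Lemma rank_AMB (A M B : 'M[F]_N) : (\rank (A *m M *m B) <= \rank M)%N.
Proof. exact: leq_trans (mxrankM_maxl _ _) (mxrankM_maxr _ _). Qed.

Lemma rank_sum (I : Type) (r : seq I) (P : pred I) (G : I -> 'M[F]_N) :
  (\rank (\sum_(i <- r | P i) G i)%R <= \sum_(i <- r | P i) \rank (G i))%N.
Proof.
elim: r => [|a r IH]; first by rewrite !big_nil mxrank0.
rewrite !big_cons; case: (P a) => //.
apply: leq_trans; first exact: mxrank_add.
by rewrite leq_add2l.
Qed.

Lemma rank_Xmul (nu : 'X_{1..n}) (g : mp) S :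
  (\rank (Mat_at ('X_[nu] * g) S) <= \rank (Mat_at g S))%N.
Proof. by rewrite Mat_Xmul; apply: leq_trans (rank_scale _ _) (rank_AMB _ _ _). Qed.

Lemma Mat_mulE (h g : mp) S :
  Mat_at (h * g) S = \sum_(nu <- msupp h) h@_nu *: Mat_at ('X_[nu] * g) S.
Proof.
rewrite {1}(mpolyE h) mulr_suml Mat_sum; apply: eq_bigr => nu _.
by rewrite -scalerAl MatZ.
Qed.

Lemma sum_const_seq (I : Type) (r : seq I) (c : nat) :
  (\sum_(i <- r) c = size r * c)%N.
Proof. by rewrite big_const_seq count_predT iter_addn_0 mulnC. Qed.

Lemma rank_sparse (h g : mp) S :
  (\rank (Mat_at (h * g) S) <= size (msupp h) * \rank (Mat_at g S))%N.
Proof.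
rewrite Mat_mulE; apply: leq_trans (rank_sum _ _ _) _.
rewrite -sum_const_seq; apply: leq_sum => nu _.
exact: leq_trans (rank_scale _ _) (rank_Xmul _ _ _).
Qed.

Lemma group_big (V : nmodType) (r : seq 'X_{1..n}) (kap : 'X_{1..n} -> {set 'I_m})
   (Y : {set 'I_m}) (G : 'X_{1..n} -> {set 'I_m} -> V) :
  (forall nu, nu \in r -> kap nu \subset Y) ->
  \sum_(nu <- r) G nu (kap nu) =
  \sum_(P in powerset Y) \sum_(nu <- r | kap nu == P) G nu P.
Proof.
move=> HY.
rewrite (eq_bigr (fun P => \sum_(nu <- r) if kap nu == P then G nu P else 0));
  last by move=> P _; rewrite big_mkcond.
rewrite exchange_big /= big_seq [RHS]big_seq; apply: eq_bigr => nu Hnu.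
rewrite -big_mkcondr /= (big_pred1 (kap nu)) //.
move=> P /=; rewrite eq_sym; case: (P =P kap nu) => [->|_]; rewrite ?andbF // andbT.
by rewrite inE; apply: HY.
Qed.

Lemma rank_mulY (h g : mp) S (Y : {set 'I_m}) :
  (forall nu, nu \in msupp h -> Ys nu \subset Y) ->
  (\rank (Mat_at (h * g) S) <= 2 ^ #|Y| * \rank (Mat_at g S))%N.
Proof.
move=> HY; rewrite Mat_mulE.
pose G := fun nu (P : {set 'I_m}) => (h@_nu * cX S nu) *: (Amat S P *m Mat_at g S *m Bmat S (Zs nu)).
rewrite (eq_bigr (fun nu => G nu (Ys nu))); last by move=> nu _; rewrite Mat_Xmul scalerA.
rewrite (group_big G HY) /G.
apply: leq_trans (rank_sum _ _ _) _.
rewrite -card_powerset -sum_nat_const; apply: leq_sum => P _.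
have -> : \sum_(nu <- msupp h | Ys nu == P) (h@_nu * cX S nu) *:
            (Amat S P *m Mat_at g S *m Bmat S (Zs nu)) =
          Amat S P *m Mat_at g S *m
            (\sum_(nu <- msupp h | Ys nu == P) (h@_nu * cX S nu) *: Bmat S (Zs nu)).
  by rewrite mulmx_sumr; apply: eq_bigr => nu _; rewrite scalemxAr.
exact: rank_AMB.
Qed.

Lemma rank_mulZ (h g : mp) S (Z : {set 'I_m}) :
  (forall nu, nu \in msupp h -> Zs nu \subset Z) ->
  (\rank (Mat_at (h * g) S) <= 2 ^ #|Z| * \rank (Mat_at g S))%N.
Proof.
move=> HZ; rewrite Mat_mulE.
pose G := fun nu (P : {set 'I_m}) => (h@_nu * cX S nu) *: (Amat S (Ys nu) *m Mat_at g S *m Bmat S P).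
rewrite (eq_bigr (fun nu => G nu (Zs nu))); last by move=> nu _; rewrite Mat_Xmul scalerA.
rewrite (group_big G HZ) /G.
apply: leq_trans (rank_sum _ _ _) _.
rewrite -card_powerset -sum_nat_const; apply: leq_sum => Q _.
have -> : \sum_(nu <- msupp h | Zs nu == Q) (h@_nu * cX S nu) *:
            (Amat S (Ys nu) *m Mat_at g S *m Bmat S Q) =
          (\sum_(nu <- msupp h | Zs nu == Q) (h@_nu * cX S nu) *: Amat S (Ys nu))
            *m Mat_at g S *m Bmat S Q.
  by rewrite !mulmx_suml; apply: eq_bigr => nu _; rewrite !scalemxAl.
exact: rank_AMB.
Qed.

Lemma rank_Mat1 S : (\rank (Mat_at (1 : mp) S) <= 1)%N.
Proof.
rewrite -mpolyX0 MX_E; apply: leq_trans (rank_scale _ _) _.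
by rewrite mxrank_delta.
Qed.

Lemma rank_triv (g : mp) S (Y Z : {set 'I_m}) :
  (forall nu, nu \in msupp g -> Ys nu \subset Y) ->
  (forall nu, nu \in msupp g -> Zs nu \subset Z) ->
  (\rank (Mat_at g S) <= 2 ^ minn #|Y| #|Z|)%N.
Proof.
move=> HY HZ; rewrite -[g]mulr1.
case: (leqP #|Y| #|Z|) => H.
- apply: leq_trans (rank_mulY _ _ HY) _.
  by rewrite -[X in (_ <= X)%N]muln1 leq_mul2l rank_Mat1 orbT.
- apply: leq_trans (rank_mulZ _ _ HZ) _.
  by rewrite -[X in (_ <= X)%N]muln1 leq_mul2l rank_Mat1 orbT.
Qed.

Local Notation form := (formula F n).

Lemma supp_vars (f : form) nu i :
  nu \in msupp (fpoly f) -> nu i != 0%N -> i \in fvars f.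
Proof.
elim: f nu => [j|c|f1 IH1 f2 IH2|f1 IH1 f2 IH2] nu /=.
- rewrite msuppX inE => /eqP ->; rewrite mnm1E inE; case: (j =P i) => [->|_] // _; exact: eqxx.
- rewrite msuppC; case: (c == 0) => //; rewrite inE => /eqP ->.
  by rewrite mnm0E.
- move=> /msuppD_le; rewrite mem_cat inE => /orP[H|H] Hi.
  + by rewrite (IH1 _ H Hi).
  + by rewrite (IH2 _ H Hi) orbT.
- move=> /msuppM_le /allpairsP [[m1 m2] /= [H1 H2 ->]].
  rewrite mnmDE addn_eq0 negb_and inE => /orP[Hi|Hi].
  + by rewrite (IH1 _ H1 Hi).
  + by rewrite (IH2 _ H2 Hi) orbT.
Qed.

Lemma supp_Y (f : form) nu : nu \in msupp (fpoly f) -> Ys nu \subset Yvars f.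
Proof.
move=> H; apply/subsetP => a; rewrite !inE => Ha.
exact: supp_vars H Ha.
Qed.

Lemma supp_Z (f : form) nu : nu \in msupp (fpoly f) -> Zs nu \subset Zvars f.
Proof.
move=> H; apply/subsetP => a; rewrite !inE => Ha.
exact: supp_vars H Ha.
Qed.

End Alg.

Lemma In_map_cons (T : Type) (f : T) (l : seq (seq T)) p :
  List.In p [seq f :: q | q <- l] <-> exists q, p = f :: q /\ List.In q l.
Proof.
elim: l p => [|a l IH] p /=; first by split => // -[q []].
split.
- case=> [<-|H]; first by exists a; auto.
  case: (proj1 (IH _) H) => q [-> Hq]; by exists q; auto.
- case=> q [-> [->|Hq]]; first by left.
  by right; apply: (proj2 (IH _)); exists q.
Qed.

Lemma In_cat (T : Type) (x : T) (s1 s2 : seq T) :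
  List.In x (s1 ++ s2) <-> List.In x s1 \/ List.In x s2.
Proof.
elim: s1 => [|a s1 IH] /=; first by split; [right|case].
by rewrite IH; tauto.
Qed.

Section Form.
Variables (F : fieldType) (m : nat).
Local Notation n := (m + m)%N.
Local Notation form := (formula F n).

Lemma lp_head (f : form) p : List.In p (leaf_paths f) -> exists rest, p = f :: rest.
Proof.
case: f => [i|c|f1 f2|f1 f2] /=; try (by case=> // <-; exists [::]);
  by move/In_map_cons => [q [-> _]]; exists q.
Qed.

Lemma lp_childA (f1 f2 : form) p :
  List.In p (leaf_paths f1) \/ List.In p (leaf_paths f2) ->
  List.In (FAdd f1 f2 :: p) (leaf_paths (FAdd f1 f2)).
Proof. by move=> H; apply/In_map_cons; exists p; split => //; apply/In_cat. Qed.

Lemma lp_childM (f1 f2 : form) p :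
  List.In p (leaf_paths f1) \/ List.In p (leaf_paths f2) ->
  List.In (FMul f1 f2 :: p) (leaf_paths (FMul f1 f2)).
Proof. by move=> H; apply/In_map_cons; exists p; split => //; apply/In_cat. Qed.

Lemma lp_sub (f : form) p u :
  List.In p (leaf_paths f) -> List.In u p -> fvars u \subset fvars f.
Proof.
elim: f p => [i|c|f1 IH1 f2 IH2|f1 IH1 f2 IH2] p /=;
  try (by case=> // <- [] // <-).
- move/In_map_cons => [q [-> Hq]] [<-|Hu]; first by [].
  case/In_cat: Hq => Hq.
  + by apply: subset_trans (IH1 _ Hq Hu) _; apply: subsetUl.
  + by apply: subset_trans (IH2 _ Hq Hu) _; apply: subsetUr.
- move/In_map_cons => [q [-> Hq]] [<-|Hu]; first by [].
  case/In_cat: Hq => Hq.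
  + by apply: subset_trans (IH1 _ Hq Hu) _; apply: subsetUl.
  + by apply: subset_trans (IH2 _ Hq Hu) _; apply: subsetUr.
Qed.

Lemma lp_nonnil (f : form) : leaf_paths f <> [::].
Proof.
elim: f => [i|c|f1 IH1 f2 IH2|f1 IH1 f2 IH2] //=;
  by case: (leaf_paths f1) IH1.
Qed.

End Form.

Section Reals.
Local Open Scope R_scope.

Lemma INR_leq (a b : nat) : (a <= b)%N -> INR a <= INR b.
Proof. by move=> /leP; apply: le_INR. Qed.

Lemma INR_expn (x : nat) : INR (expn 2 x) = Rpower 2 (INR x).
Proof.
rewrite Rpower_pow; last lra.
elim: x => [|x IH] //=; rewrite expnS mulnE mult_INR IH /=; lra.
Qed.

Lemma Rpower_pos x : 0 < Rpower 2 x.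
Proof. exact: exp_pos. Qed.

Lemma Rpower_mono x y : x <= y -> Rpower 2 x <= Rpower 2 y.
Proof. by move=> H; apply: Rle_Rpower => //; lra. Qed.

Lemma expn_ge1 x : 1 <= INR (expn 2 x).
Proof.
rewrite INR_expn -(Rpower_O 2); last lra.
by apply: Rpower_mono; apply: pos_INR.
Qed.

Lemma expn_mono x y : (x <= y)%N -> INR (expn 2 x) <= INR (expn 2 y).
Proof. by move=> H; apply: INR_leq; apply: leq_pexp2l. Qed.

End Reals.

Section Form2.
Variables (F : fieldType) (m : nat).
Local Notation n := (m + m)%N.
Local Notation form := (formula F n).
Local Open Scope R_scope.

Lemma fsize_ge1 (f : form) : 1 <= INR (fsize f).
Proof. by apply: (INR_leq (a := 1)); case: f. Qed.

Lemma Yvars_sub (u f : form) : fvars u \subset fvars f -> Yvars u \subset Yvars f.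
Proof. move=> /subsetP H; apply/subsetP => a; rewrite !inE; exact: H. Qed.
Lemma Zvars_sub (u f : form) : fvars u \subset fvars f -> Zvars u \subset Zvars f.
Proof. move=> /subsetP H; apply/subsetP => a; rewrite !inE; exact: H. Qed.

Lemma bnode_mono (u f : form) : fvars u \subset fvars f -> bnode u <= bnode f.
Proof.
move=> H; rewrite /bnode.
have := INR_leq (subset_leq_card (Yvars_sub H)).
have := INR_leq (subset_leq_card (Zvars_sub H)).
lra.
Qed.

Lemma anode_ge0 (f : form) : 0 <= anode f.
Proof. exact: pos_INR. Qed.

Lemma anode_le (f : form) : anode f <= bnode f.
Proof.
rewrite /anode /bnode.
have := INR_leq (geq_minl #|Yvars f| #|Zvars f|).
have := INR_leq (geq_minr #|Yvars f| #|Zvars f|).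
lra.
Qed.

Lemma YvarsA (f1 f2 : form) : Yvars (FAdd f1 f2) = Yvars f1 :|: Yvars f2.
Proof. by apply/setP => a; rewrite !inE. Qed.
Lemma ZvarsA (f1 f2 : form) : Zvars (FAdd f1 f2) = Zvars f1 :|: Zvars f2.
Proof. by apply/setP => a; rewrite !inE. Qed.
Lemma YvarsM (f1 f2 : form) : Yvars (FMul f1 f2) = Yvars f1 :|: Yvars f2.
Proof. by apply/setP => a; rewrite !inE. Qed.
Lemma ZvarsM (f1 f2 : form) : Zvars (FMul f1 f2) = Zvars f1 :|: Zvars f2.
Proof. by apply/setP => a; rewrite !inE. Qed.

Lemma cardU_le (T : finType) (A B : {set T}) : (#|A :|: B| <= #|A| + #|B|)%N.
Proof. by rewrite cardsU leq_subr. Qed.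

Lemma bnode_opA (f1 f2 : form) : bnode (FAdd f1 f2) <= bnode f1 + bnode f2.
Proof.
rewrite /bnode YvarsA ZvarsA.
have := INR_leq (cardU_le (Yvars f1) (Yvars f2)).
have := INR_leq (cardU_le (Zvars f1) (Zvars f2)).
rewrite !plus_INR; lra.
Qed.
Lemma bnode_opM (f1 f2 : form) : bnode (FMul f1 f2) <= bnode f1 + bnode f2.
Proof.
rewrite /bnode YvarsM ZvarsM.
have := INR_leq (cardU_le (Yvars f1) (Yvars f2)).
have := INR_leq (cardU_le (Zvars f1) (Zvars f2)).
rewrite !plus_INR; lra.
Qed.

Lemma bnode_disj (f1 f2 : form) : disjoint_prod f1 f2 ->
  bnode f1 + bnode f2 <= bnode (FMul f1 f2).
Proof.
move=> /eqP D.
have HY : Yvars f1 :&: Yvars f2 = set0.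
  apply/setP => a; rewrite !inE; apply/negbTE/negP => /andP[H1 H2].
  by move: (in_set0 (lshift m a)); rewrite -D inE H1 H2.
have HZ : Zvars f1 :&: Zvars f2 = set0.
  apply/setP => a; rewrite !inE; apply/negbTE/negP => /andP[H1 H2].
  by move: (in_set0 (rshift m a)); rewrite -D inE H1 H2.
rewrite /bnode YvarsM ZvarsM !cardsU HY HZ !cards0 !subn0 !plus_INR; lra.
Qed.

Lemma central_exists (f : form) :
  exists p, List.In p (leaf_paths f) /\ central p.
Proof.
elim: f => [i|c|f1 [p1 [H1 C1]] f2 [p2 [H2 C2]]|f1 [p1 [H1 C1]] f2 [p2 [H2 C2]]].
- by exists [:: FVar i]; split => //; left.
- by exists [:: FConst c]; split => //; left.
- have := bnode_opA f1 f2.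
  case: (Rle_dec (bnode (FAdd f1 f2)) (2 * bnode f1)) => Hb Hs.
  + exists (FAdd f1 f2 :: p1); split; first by apply: lp_childA; left.
    case: (lp_head H1) => r Er; rewrite Er in C1 *; by split.
  + exists (FAdd f1 f2 :: p2); split; first by apply: lp_childA; right.
    case: (lp_head H2) => r Er; rewrite Er in C2 *; split => //; lra.
- have := bnode_opM f1 f2.
  case: (Rle_dec (bnode (FMul f1 f2)) (2 * bnode f1)) => Hb Hs.
  + exists (FMul f1 f2 :: p1); split; first by apply: lp_childM; left.
    case: (lp_head H1) => r Er; rewrite Er in C1 *; by split.
  + exists (FMul f1 f2 :: p2); split; first by apply: lp_childM; right.
    case: (lp_head H2) => r Er; rewrite Er in C2 *; split => //; lra.
Qed.

Lemma weak_le k (f : form) : weak k f -> k <= bnode f.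
Proof.
move=> W; case: (central_exists f) => p [Hp Cp].
case/List.Exists_exists: (W p Hp Cp) => u [Hu U].
have := bnode_mono (lp_sub Hp Hu); have := anode_ge0 u.
rewrite /unbalanced in U; lra.
Qed.

Lemma weak_child k (f fi : form) : weak k f -> ~ unbalanced k f ->
  (forall p, List.In p (leaf_paths fi) -> List.In (f :: p) (leaf_paths f)) ->
  bnode f <= 2 * bnode fi -> weak k fi.
Proof.
move=> W NU Hlp Hb p Hp Cp.
case: (lp_head Hp) => r Er.
have C : central (f :: p) by rewrite Er in Cp *; split.
case/List.Exists_cons: (W _ (Hlp _ Hp) C) => // U.
Qed.

Lemma weak_leaf k (f : form) : leaf_paths f = [:: [:: f]] -> weak k f -> unbalanced k f.
Proof.
move=> E W; have : List.In [:: f] (leaf_paths f) by rewrite E; left.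
move=> H; case/List.Exists_cons: (W _ H I) => // /List.Exists_exists [x [[]]].
Qed.

Lemma sub_ok s (Phi v : form) :
  List.In v (subformulas Phi) -> prod_gates_ok s Phi -> prod_gates_ok s v.
Proof.
elim: Phi => [i|c|f1 IH1 f2 IH2|f1 IH1 f2 IH2] /=.
- by case=> // <-.
- by case=> // <-.
- case=> [<- //|/In_cat [H|H]] [O1 O2]; [exact: IH1 | exact: IH2].
- case=> [<- //|/In_cat [H|H]] [_ [O1 O2]]; [exact: IH1 | exact: IH2].
Qed.

Lemma bigmax_addl (T : Type) (l : seq T) c (G : T -> nat) : l <> [::] ->
  (\max_(p <- l) (c + G p) = c + \max_(p <- l) G p)%N.
Proof.
elim: l => [//|a l IH] _; rewrite !big_cons.
case: l IH => [|b l] IH; first by rewrite !big_nil !maxn0.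
by rewrite IH // addn_maxr.
Qed.

Lemma psdA (f1 f2 : form) :
  psdepth (FAdd f1 f2) = maxn (psdepth f1) (psdepth f2).
Proof. by rewrite /psdepth /= big_map big_cat. Qed.

Lemma psdM (f1 f2 : form) :
  psdepth (FMul f1 f2) = (nondisj_prod (FMul f1 f2) + maxn (psdepth f1) (psdepth f2))%N.
Proof.
rewrite /psdepth /= big_map big_cat /=.
rewrite !bigmax_addl ?addn_maxr //; exact: lp_nonnil.
Qed.

End Form2.

Section Main.
Variables (F : fieldType) (m : nat).
Local Notation n := (m + m)%N.
Local Notation form := (formula F n).
Local Open Scope R_scope.

Definition rk (f : form) S := INR (\rank (Mat_at (fpoly f) S)).

Lemma triv_R (f : form) S : rk f S <= Rpower 2 (anode f).
Proof.
rewrite /rk /anode -INR_expn; apply: INR_leq.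
exact: rank_triv (@supp_Y _ _ f) (@supp_Z _ _ f).
Qed.

Lemma rank_min (o : form) (g : {mpoly F[n]}) S :
  INR (\rank (Mat_at (fpoly o * g)%R S)) <= Rpower 2 (anode o) * INR (\rank (Mat_at g S)).
Proof.
rewrite /anode -INR_expn -mult_INR -mulnE; apply: INR_leq.
case: (leqP #|Yvars o| #|Zvars o|) => H.
- exact: rank_mulY (@supp_Y _ _ o).
- exact: rank_mulZ (@supp_Z _ _ o).
Qed.

Lemma rank_sparse_R (o : form) (g : {mpoly F[n]}) S s :
  (size (msupp (fpoly o)) <= expn 2 s)%N ->
  INR (\rank (Mat_at (fpoly o * g)%R S)) <= INR (expn 2 s) * INR (\rank (Mat_at g S)).
Proof.
move=> H; rewrite -mult_INR -mulnE; apply: INR_leq.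
apply: leq_trans (rank_sparse _ _ _) _; by rewrite leq_mul2r H orbT.
Qed.

Definition bound s k (f : form) :=
  INR (expn 2 (s * psdepth f)) * INR (fsize f) * Rpower 2 (bnode f - k / 2).

Lemma bound_unb s k (v : form) S : unbalanced k v -> rk v S <= bound s k v.
Proof.
move=> U; rewrite /bound /unbalanced in U *.
have H1 := triv_R v S.
have H2 : Rpower 2 (anode v) <= Rpower 2 (bnode v - k / 2).
  by apply: Rpower_mono; have := anode_le v; lra.
have E := expn_ge1 (s * psdepth v); have B := fsize_ge1 v; have P := Rpower_pos (bnode v - k / 2).
have AB : 1 <= INR (expn 2 (s * psdepth v)) * INR (fsize v) by nra.
nra.
Qed.

Lemma child_bound s k (v c : form) :
  (weak k c -> forall S, rk c S <= bound s k c) ->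
  weak k v -> ~ unbalanced k v ->
  (forall p, List.In p (leaf_paths c) -> List.In (v :: p) (leaf_paths v)) ->
  fvars c \subset fvars v ->
  forall S, rk c S <= INR (expn 2 (s * psdepth c)) * INR (fsize c) *
                      Rpower 2 (bnode v - k / 2).
Proof.
move=> IH W NU Hlp Hsub S.
have E1 := expn_ge1 (s * psdepth c); have B1 := fsize_ge1 c.
case: (Rle_dec (bnode v) (2 * bnode c)) => Hb.
- have Wc := weak_child W NU Hlp Hb.
  apply: Rle_trans (IH Wc S) _; rewrite /bound.
  apply: Rmult_le_compat_l; first nra.
  by apply: Rpower_mono; have := bnode_mono Hsub; lra.
- have H1 := triv_R c S.
  have H2 : Rpower 2 (anode c) <= Rpower 2 (bnode v - k / 2).
    apply: Rpower_mono; have := anode_le c; have := weak_le W; lra.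
  have P := Rpower_pos (bnode v - k / 2).
  have AB : 1 <= INR (expn 2 (s * psdepth c)) * INR (fsize c) by nra.
  nra.
Qed.


Lemma sum_arith r r1 r2 A1 A2 A B1 B2 B P :
  r <= r1 + r2 -> r1 <= A1 * B1 * P -> r2 <= A2 * B2 * P ->
  1 <= A1 <= A -> 1 <= A2 <= A -> 0 <= B1 -> 0 <= B2 -> B1 + B2 <= B -> 0 < P ->
  r <= A * B * P.
Proof.
move=> H H1 H2 HA1 HA2 HB1 HB2 HB HP.
have h1 : 0 <= (A - A1) * (B1 * P) by apply: Rmult_le_pos; nra.
have h2 : 0 <= (A - A2) * (B2 * P) by apply: Rmult_le_pos; nra.
have h3 : 0 <= A * ((B - B1 - B2) * P) by apply: Rmult_le_pos; nra.
nra.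
Qed.

Lemma disj_arith rv rc ao bc bv kk Ac A Bc B :
  rv <= Rpower 2 ao * rc -> rc <= Ac * Bc * Rpower 2 (bc - kk) ->
  ao + bc <= bv -> 1 <= Ac <= A -> 1 <= Bc <= B ->
  rv <= A * B * Rpower 2 (bv - kk).
Proof.
move=> H1 H2 Hb HA HB.
have P1 := Rpower_pos ao.
have E : Rpower 2 ao * (Ac * Bc * Rpower 2 (bc - kk)) =
         Ac * Bc * Rpower 2 (ao + (bc - kk)) by rewrite Rpower_plus; ring.
have M : Rpower 2 (ao + (bc - kk)) <= Rpower 2 (bv - kk) by apply: Rpower_mono; lra.
have P2 := Rpower_pos (bv - kk).
have h1 : Rpower 2 ao * rc <= Rpower 2 ao * (Ac * Bc * Rpower 2 (bc - kk)).
  by apply: Rmult_le_compat_l; lra.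
have h2 : 0 <= (Ac * Bc) * (Rpower 2 (bv - kk) - Rpower 2 (ao + (bc - kk))).
  by apply: Rmult_le_pos; nra.
have h3 : 0 <= (A * B - Ac * Bc) * Rpower 2 (bv - kk).
  by apply: Rmult_le_pos; nra.
nra.
Qed.

Lemma sparse_arith rv r2 E A2 A B2 B P :
  rv <= E * r2 -> r2 <= A2 * B2 * P -> E * A2 <= A -> 0 <= E ->
  1 <= A2 -> 1 <= B2 <= B -> 0 < P -> rv <= A * B * P.
Proof.
move=> H1 H2 HE E0 HA2 HB HP.
have h1 : E * r2 <= E * (A2 * B2 * P) by apply: Rmult_le_compat_l.
have h2 : 0 <= (A - E * A2) * (B2 * P) by apply: Rmult_le_pos; nra.
have h3 : 0 <= A * ((B - B2) * P) by apply: Rmult_le_pos; nra.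
nra.
Qed.


Theorem main s k (v : form) :
  prod_gates_ok s v -> weak k v -> forall S, rk v S <= bound s k v.
Proof.
elim: v => [i|c|v1 IH1 v2 IH2|v1 IH1 v2 IH2] Ok W S.
- by apply: bound_unb; apply: weak_leaf W.
- by apply: bound_unb; apply: weak_leaf W.
- case: (classic (unbalanced k (FAdd v1 v2))) => [U|NU]; first exact: bound_unb.
  case: Ok => O1 O2.
  have C1 := child_bound (IH1 O1) W NU (fun p H => lp_childA (or_introl H))
               (subsetUl _ _) S.
  have C2 := child_bound (IH2 O2) W NU (fun p H => lp_childA (or_intror H))
               (subsetUr _ _) S.
  have Hr : rk (FAdd v1 v2) S <= rk v1 S + rk v2 S.
    rewrite /rk /= MatD -plus_INR; apply: INR_leq; exact: mxrank_add.
  rewrite /bound; apply: sum_arith Hr C1 C2 _ _ _ _ _ _.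
  + split; first exact: expn_ge1.
    by apply: expn_mono; rewrite psdA leq_mul2l leq_maxl orbT.
  + split; first exact: expn_ge1.
    by apply: expn_mono; rewrite psdA leq_mul2l leq_maxr orbT.
  + exact: pos_INR.
  + exact: pos_INR.
  + change (INR (fsize v1) + INR (fsize v2) <= INR (fsize v1 + fsize v2).+1).
    rewrite S_INR plus_INR; lra.
  + exact: Rpower_pos.
- case: (classic (unbalanced k (FMul v1 v2))) => [U|NU]; first exact: bound_unb.
  case: Ok => G [O1 O2].
  have L1 : forall p, List.In p (leaf_paths v1) -> List.In (FMul v1 v2 :: p) (leaf_paths (FMul v1 v2)).
    by move=> p H; apply: lp_childM; left.
  have L2 : forall p, List.In p (leaf_paths v2) -> List.In (FMul v1 v2 :: p) (leaf_paths (FMul v1 v2)).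
    by move=> p H; apply: lp_childM; right.
  have Bs : INR (fsize v1) <= INR (fsize (FMul v1 v2)) /\ INR (fsize v2) <= INR (fsize (FMul v1 v2)).
    change (INR (fsize v1) <= INR (fsize v1 + fsize v2).+1 /\
            INR (fsize v2) <= INR (fsize v1 + fsize v2).+1).
    rewrite S_INR plus_INR.
    have := pos_INR (fsize v1); have := pos_INR (fsize v2); lra.
  case: Bs => Bs1 Bs2.
  have Bg1 := fsize_ge1 v1; have Bg2 := fsize_ge1 v2.
  case D: (disjoint_prod v1 v2).
  + have Hpsd : psdepth (FMul v1 v2) = maxn (psdepth v1) (psdepth v2) by rewrite psdM /= D.
    have Hbd := bnode_disj D.
    case: (Rle_dec (bnode (FMul v1 v2)) (2 * bnode v1)) => Hb.
    * have R1 := IH1 O1 (weak_child W NU L1 Hb) S; rewrite /bound in R1.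
      have Hr : rk (FMul v1 v2) S <= Rpower 2 (anode v2) * rk v1 S.
        by rewrite /rk /= GRing.mulrC; exact: rank_min.
      rewrite /bound; apply: disj_arith Hr R1 _ _ _.
      -- have := anode_le v2; lra.
      -- split; first exact: expn_ge1.
         by apply: expn_mono; rewrite Hpsd leq_mul2l leq_maxl orbT.
      -- by split.
    * have Hb2 : bnode (FMul v1 v2) <= 2 * bnode v2 by have := bnode_opM v1 v2; lra.
      have R2 := IH2 O2 (weak_child W NU L2 Hb2) S; rewrite /bound in R2.
      have Hr : rk (FMul v1 v2) S <= Rpower 2 (anode v1) * rk v2 S.
        by rewrite /rk /=; exact: rank_min.
      rewrite /bound; apply: disj_arith Hr R2 _ _ _.
      -- have := anode_le v1; lra.
      -- split; first exact: expn_ge1.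
         by apply: expn_mono; rewrite Hpsd leq_mul2l leq_maxr orbT.
      -- by split.
  + have Hpsd : psdepth (FMul v1 v2) = (1 + maxn (psdepth v1) (psdepth v2))%N
      by rewrite psdM /= D.
    rewrite D /= in G.
    have C1 := child_bound (IH1 O1) W NU L1 (subsetUl _ _) S.
    have C2 := child_bound (IH2 O2) W NU L2 (subsetUr _ _) S.
    rewrite /bound; case/orP: G => Sp.
    * have Hr : rk (FMul v1 v2) S <= INR (expn 2 s) * rk v2 S.
        by rewrite /rk /=; exact: rank_sparse_R.
      apply: sparse_arith Hr C2 _ _ _ _ _.
      -- rewrite -mult_INR -mulnE -expnD; apply: expn_mono.
         by rewrite Hpsd mulnDr muln1 leq_add2l leq_mul2l leq_maxr orbT.
      -- exact: pos_INR.
      -- exact: expn_ge1.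
      -- by split.
      -- exact: Rpower_pos.
    * have Hr : rk (FMul v1 v2) S <= INR (expn 2 s) * rk v1 S.
        by rewrite /rk /= GRing.mulrC; exact: rank_sparse_R.
      apply: sparse_arith Hr C1 _ _ _ _ _.
      -- rewrite -mult_INR -mulnE -expnD; apply: expn_mono.
         by rewrite Hpsd mulnDr muln1 leq_add2l leq_mul2l leq_maxl orbT.
      -- exact: pos_INR.
      -- exact: expn_ge1.
      -- by split.
      -- exact: Rpower_pos.
Qed.

End Main.

Lemma decideP (P : Prop) : decide P -> P.
Proof. by rewrite /decide; case: excluded_middle_informative. Qed.

Lemma maxrank_le (F : fieldType) (m : nat) (g : {mpoly F[m + m]}) (B : R) :
  Rle 0 B -> (forall S, Rle (INR (\rank (Mat_at g S))) B) -> Rle (INR (maxrank g)) B.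
Proof.
move=> B0 H; rewrite /maxrank.
apply: (big_ind (fun x => Rle (INR x) B)) => //.
- move=> x y Hx Hy; rewrite /maxn; by case: (x < y)%N.
- move=> r /decideP [S <-]; exact: H.
Qed.


End Aux.
Import Aux.

Theorem lemma8 (F : fieldType) (m s d : nat) (k : R)
    (Phi v : formula F (m + m)) :
  product_sparse s d Phi ->
  List.In v (subformulas Phi) ->
  weak k v ->
  Rle (INR (maxrank (fpoly v)))
      (Rmult (Rmult (INR (expn 2 (s * psdepth v))) (INR (fsize v)))
             (Rpower 2 (Rminus (bnode v) (Rdiv k 2)))).
Proof.
move=> [Ok _] Hin W.
have Okv := sub_ok Hin Ok.
apply: maxrank_le.
- have E1 := expn_ge1 (s * psdepth v); have E2 := fsize_ge1 v.
  have E3 := Rpower_pos (Rminus (bnode v) (Rdiv k 2)).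
  apply: Rmult_le_pos; [apply: Rmult_le_pos; lra | lra].
- move=> S; exact: (main Okv W S).
Qed.
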